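(* Let $X$ be a convex metric space over a Boolean ring $B$, let $0,0'\in X$, let $\{x_{1},\ldots,x_{n}\}$ be a base of $(X,0)$ and $\{y_{1},\ldots,y_{m}\}$ a base of $(X,0')$. Then $n=m$ and $d(0,x_i)=d(0',y_i)$ for $i=1,\ldots,n$. Moreover, there exists an isometry $f:X\to X$ with $f(0)=0'$ and $f(x_{i})=y_{i}$ for $i=1,\ldots,n$.
   Context: $B$ is a Boolean ring ($a\vee b=a+b+ab$, $a\le b\iff ab=a$; $a_1\oplus\cdots\oplus a_n$ denotes a sum of pairwise disjoint elements). A Boolean metric space over $B$: set $X$ with $d:X\times X\to B$, $d(x,y)=0\iff x=y$, symmetric, $d(x,z)\le d(x,y)\vee d(y,z)$. For $x_1,\dots,x_n\in X$, $a_1,\dots,a_n\in B$ with $a_1\oplus\cdots\oplus a_n=1$, $x$ is a convex combination of the $x_i$ with coefficients $a_i$ if $a_id(x,x_i)=0$ for all $i$; $X$ is convex if all such combinations exist. An isometry is a bijection preserving $d$. In a pointed space $(X,0)$, $|x|=d(0,x)$; $x,y$ are orthogonal if $d(x,y)=|x|\vee|y|$; a finite $R\subseteq X$ is orthogonal if $0\notin R$ and distinct elements are orthogonal; a referential of $(X,0)$ is an orthogonal $R$ such that every element of $X$ is a convex combination of elements of $R\cup\{0\}$; a base of $(X,0)$ is a referential $\{x_1,\dots,x_n\}$ with $|x_1|\ge\cdots\ge|x_n|$. *)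

(* Defs.v *)
From HB Require Import structures.
From mathcomp Require Import all_boot all_order all_algebra.
Set Implicit Arguments. Unset Strict Implicit. Unset Printing Implicit Defensive.
Import GRing.Theory.
Local Open Scope ring_scope.

Definition boolean_ring (B : pzRingType) : Prop := forall a : B, a * a = a.

Section BoolMetric.
Variables (B : pzRingType) (X : Type) (d : X -> X -> B).

Definition bjoin (a b : B) : B := a + b + a * b.
Definition ble (a b : B) : Prop := a * b = a.

Definition boolean_metric : Prop :=
  [/\ (forall x y, d x y = 0 <-> x = y),
      (forall x y, d x y = d y x) &
      (forall x y z, ble (d x z) (bjoin (d x y) (d y z)))].

Definition disjoint_partition (k : nat) (a : 'I_k -> B) : Prop :=
  (forall i j, i != j -> a i * a j = 0) /\ \sum_(i < k) a i = 1.

Definition convex_comb (k : nat) (xs : 'I_k -> X) (a : 'I_k -> B) (x : X) : Prop :=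
  forall i, a i * d x (xs i) = 0.

Definition convex_space : Prop :=
  forall (k : nat) (xs : 'I_k -> X) (a : 'I_k -> B),
    disjoint_partition a -> exists x, convex_comb xs a x.

Definition bisometry (f : X -> X) : Prop :=
  bijective f /\ forall x y, d (f x) (f y) = d x y.

Definition bnorm (o x : X) : B := d o x.

Definition orthogonal (o x y : X) : Prop := d x y = bjoin (bnorm o x) (bnorm o y).

Definition orthogonal_set (o : X) (n : nat) (r : 'I_n -> X) : Prop :=
  [/\ injective r, (forall i, r i <> o) &
      (forall i j, i != j -> orthogonal o (r i) (r j))].

Definition referential (o : X) (n : nat) (r : 'I_n -> X) : Prop :=
  orthogonal_set o r /\
  forall x : X, exists (k : nat) (xs : 'I_k -> X) (a : 'I_k -> B),
    [/\ (forall i, xs i = o \/ exists j, xs i = r j),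
        disjoint_partition a & convex_comb xs a x].

Definition base (o : X) (n : nat) (r : 'I_n -> X) : Prop :=
  referential o r /\
  forall i j : 'I_n, (i <= j)%N -> ble (bnorm o (r j)) (bnorm o (r i)).

End BoolMetric.

(* Main.v *)
Require Import Defs.
From mathcomp Require Import all_boot all_order all_algebra.
Set Implicit Arguments. Unset Strict Implicit. Unset Printing Implicit Defensive.
Import GRing.Theory.
Local Open Scope ring_scope.

Section BoolAlg.
Variables (B : pzRingType) (HB : boolean_ring B).

Lemma bidem (a : B) : a * a = a.
Proof. exact: HB. Qed.

Lemma b_add2 (a : B) : a + a = 0.
Proof.
have := HB (a + a); rewrite mulrDl !mulrDr !HB => E.
by move/(congr1 (fun t => t - (a + a))): E; rewrite addrK subrr.
Qed.

Lemma b_opp (a : B) : - a = a.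
Proof. by have /eqP := b_add2 a; rewrite addr_eq0 => /eqP {2}->. Qed.

Lemma b_mulC (a b : B) : a * b = b * a.
Proof.
have := HB (a + b); rewrite mulrDl !mulrDr !HB => E.
have E2 : a * b + b * a = 0.
  apply: (addrI (a + b)); rewrite addr0 -[RHS]E.
  by rewrite -!addrA; congr (_ + _); rewrite addrC -!addrA.
by have /eqP := E2; rewrite addr_eq0 b_opp => /eqP.
Qed.

Lemma b_mulCA (a b c : B) : a * (b * c) = b * (a * c).
Proof. by rewrite !mulrA (b_mulC a b). Qed.
Lemma b_mulAC (a b c : B) : a * b * c = a * c * b.
Proof. by rewrite -!mulrA (b_mulC b c). Qed.

Lemma b_compl (a : B) : a * (1 + a) = 0.
Proof. by rewrite mulrDr mulr1 HB b_add2. Qed.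
Lemma b_complC (a : B) : (1 + a) * a = 0.
Proof. by rewrite b_mulC b_compl. Qed.

End BoolAlg.

Section Metric.
Variables (B : pzRingType) (HB : boolean_ring B) (X : Type) (d : X -> X -> B)
  (Hd : boolean_metric d).

Lemma dxx x : d x x = 0.
Proof. by case: Hd => H _ _; apply/H. Qed.
Lemma d_eq0 x y : d x y = 0 -> x = y.
Proof. by case: Hd => H _ _; move/H. Qed.
Lemma dC x y : d x y = d y x.
Proof. by case: Hd. Qed.

Lemma loc_le c x y z : c * d y z = 0 -> c * d x z * d x y = c * d x z.
Proof.
move=> H; case: Hd => _ _ Ht; have T := Ht x y z; rewrite /ble /bjoin in T.
rewrite -{2}T !mulrDr.
rewrite [c * (d x z * d y z)](b_mulCA HB) H mulr0 addr0.
rewrite [c * (d x z * (d x y * d y z))](b_mulCA HB) [c * (d x y * d y z)](b_mulCA HB).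
by rewrite H !mulr0 addr0 mulrA.
Qed.

Lemma loc_eq c x y z : c * d y z = 0 -> c * d x y = c * d x z.
Proof.
move=> H; have h1 := loc_le x H.
have H' : c * d z y = 0 by rewrite dC.
have h2 := loc_le x H'.
by rewrite -h2 (b_mulAC HB) h1.
Qed.

Lemma loc_subst c p P q Q : c * d p P = 0 -> c * d q Q = 0 -> c * d p q = c * d P Q.
Proof.
move=> H1 H2; rewrite dC (loc_eq q H1) dC.
exact: loc_eq.
Qed.

End Metric.

Section Frame.
Variables (B : pzRingType) (HB : boolean_ring B) (X : Type) (d : X -> X -> B)
  (Hd : boolean_metric d).

Definition Dm (N : nat -> B) (J J' : nat) : B :=
  if J == J' then 0 else if J == 0%N then N J' else if J' == 0%N then N J
  else bjoin (N J) (N J').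

Definition frame (n : nat) (P : nat -> X) (N : nat -> B) : Prop :=
  [/\ N 0%N = 1,
      (forall J J', (J < n.+1)%N -> (J' < n.+1)%N -> d (P J) (P J') = Dm N J J') &
      (forall p, exists (k : nat) (xs : 'I_k -> X) (a : 'I_k -> B),
         [/\ (forall i, exists2 J, (J < n.+1)%N & xs i = P J),
             disjoint_partition a & convex_comb d xs a p])].

Definition coef (P : nat -> X) (N : nat -> B) p J := N J * (1 + d p (P J)).

Lemma babs (x a b : B) : x * (a * b) * a = x * (a * b).
Proof. by rewrite -!mulrA [b * a](b_mulC HB) [a * (a * b)]mulrA (bidem HB). Qed.

Lemma b_ge (c e : B) : c * e = 0 -> c * (1 + e) = c.
Proof. by move=> H; rewrite mulrDr mulr1 H addr0. Qed.

Lemma Dm_FA N J J' : N 0%N = 1 -> J != J' -> N J * N J' * Dm N J J' = N J * N J'.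
Proof.
move=> N0 ne; rewrite /Dm (negbTE ne).
case: eqP => [->|_]; first by rewrite N0 !mul1r (bidem HB).
case: eqP => [->|_]; first by rewrite N0 mulr1 (bidem HB).
rewrite /bjoin !mulrDr [N J * N J' * N J](b_mulAC HB) (bidem HB) -[N J * N J' * N J']mulrA (bidem HB).
by rewrite (bidem HB) (b_add2 HB) add0r.
Qed.

Lemma Dm_FB N J : Dm N J 0 * (1 + N J) = 0.
Proof.
rewrite /Dm; case: (J =P 0%N) => [->|/eqP ne] /=; first by rewrite mul0r.
by rewrite (b_compl HB).
Qed.

Variables (n : nat) (P : nat -> X) (N : nat -> B) (Hf : frame n P N).

Lemma coef_near p J : coef P N p J * d p (P J) = 0.
Proof. by rewrite /coef -mulrA mulrDl mul1r (bidem HB) (b_add2 HB) mulr0. Qed.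

Lemma coef_le c p J : c * d p (P J) = 0 -> c * N J = c -> c * coef P N p J = c.
Proof. by move=> H1 H2; rewrite /coef mulrA H2 b_ge. Qed.

Lemma coef_disj p J J' : (J < n.+1)%N -> (J' < n.+1)%N -> J != J' ->
  coef P N p J * coef P N p J' = 0.
Proof.
case: Hf => N0 HD _ hJ hJ' ne.
set c := coef P N p J * coef P N p J'.
have c1 : c * d p (P J) = 0 by rewrite /c (b_mulAC HB) coef_near mul0r.
have c2 : c * d p (P J') = 0 by rewrite /c -mulrA coef_near mulr0.
have := loc_subst HB Hd c1 c2; rewrite (dxx Hd) mulr0 HD // => cD.
have cN1 : c * N J = c by rewrite /c /coef (b_mulC HB) -!mulrA [N J * (N J * _)]mulrA (bidem HB).
have cN2 : c * N J' = c by rewrite /c /coef babs.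
have E : c = c * (N J * N J') by rewrite mulrA cN1 cN2.
by rewrite E -(Dm_FA N0 ne) mulrA (b_mulAC HB) -cD mul0r.
Qed.

Lemma ord_neq (k J : nat) (hJ : (J < k)%N) (K : 'I_k) : K != Ordinal hJ -> J != K.
Proof. by move=> ne; apply/eqP => h; move/eqP: ne; apply; apply: val_inj; rewrite /= h. Qed.

Lemma coef_absorb p J : (J < n.+1)%N ->
  coef P N p J * (1 + \sum_(K < n.+1) coef P N p K) = 0.
Proof.
move=> hJ; rewrite mulrDr mulr1 mulr_sumr (bigD1 (Ordinal hJ)) //= (bidem HB).
rewrite big1 ?addr0 ?(b_add2 HB) // => K ne; apply: coef_disj => //.
exact: ord_neq ne.
Qed.

Lemma coef_sum p : \sum_(J < n.+1) coef P N p J = 1.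
Proof.
have [N0 HD Hcov] := Hf.
set S := \sum_(J < n.+1) coef P N p J.
suff: 1 + S = 0 by move/eqP; rewrite addr_eq0 (b_opp HB) => /eqP ->.
have key : forall c J, (J < n.+1)%N -> c * d p (P J) = 0 -> c * (1 + S) = 0.
  move=> c J hJ h.
  have e1 : c * N J * (1 + S) = 0.
    have h1 : c * N J * d p (P J) = 0 by rewrite (b_mulAC HB) h mul0r.
    have h2 : c * N J * N J = c * N J by rewrite -mulrA (bidem HB).
    by rewrite -(coef_le h1 h2) -mulrA coef_absorb // mulr0.
  have e2 : c * (1 + N J) * (1 + S) = 0.
    set c' := c * (1 + N J).
    have h1 : c' * d p (P J) = 0 by rewrite /c' (b_mulAC HB) h mul0r.
    have h0 : c' * d (P 0%N) (P 0%N) = 0 by rewrite (dxx Hd) mulr0.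
    have h2 : c' * d p (P 0%N) = 0.
      rewrite (loc_subst HB Hd h1 h0) HD // /c' -mulrA (b_mulC HB (1 + N J)).
      by rewrite Dm_FB mulr0.
    have h3 : c' * N 0%N = c' by rewrite N0 mulr1.
    by rewrite -(coef_le h2 h3) -mulrA coef_absorb // mulr0.
  have -> : c = c * N J + c * (1 + N J).
    by rewrite -mulrDr addrCA (b_add2 HB) addr0 mulr1.
  by rewrite mulrDl e1 e2 addr0.
have [k [xs [a [hc [_ ha1] hcomb]]]] := Hcov p.
have -> : 1 + S = (\sum_i a i) * (1 + S) by rewrite ha1 mul1r.
rewrite mulr_suml big1 // => i _.
have [J hJ e] := hc i.
by apply: (key _ J hJ); rewrite -e; apply: hcomb.
Qed.

Lemma coef_inj p q : (forall J, (J < n.+1)%N -> coef P N p J = coef P N q J) -> p = q.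
Proof.
move=> H; apply: (d_eq0 Hd).
have -> : d p q = (\sum_(J < n.+1) coef P N p J) * d p q by rewrite coef_sum mul1r.
rewrite mulr_suml big1 // => J _.
have h1 : coef P N p J * d p (P J) = 0 := coef_near p J.
have h2 : coef P N p J * d q (P J) = 0 by rewrite H // coef_near.
by rewrite (loc_subst HB Hd h1 h2) (dxx Hd) mulr0.
Qed.

Lemma dist_formula p q : d p q =
  \sum_(J < n.+1) \sum_(K < n.+1) coef P N p J * coef P N q K * d (P J) (P K).
Proof.
have -> : d p q = (\sum_(J < n.+1) coef P N p J) * d p q by rewrite coef_sum mul1r.
rewrite mulr_suml; apply: eq_bigr => J _.
transitivity ((coef P N p J * \sum_(K < n.+1) coef P N q K) * d p q).
  by rewrite coef_sum mulr1.
rewrite mulr_sumr mulr_suml; apply: eq_bigr => K _.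
have h1 : coef P N p J * coef P N q K * d p (P J) = 0.
  by rewrite (b_mulAC HB) coef_near mul0r.
have h2 : coef P N p J * coef P N q K * d q (P K) = 0.
  by rewrite -mulrA coef_near mulr0.
exact: (loc_subst HB Hd h1 h2).
Qed.

End Frame.

Lemma partition_eq (B : pzRingType) (HB : boolean_ring B) (G H : nat -> B) (K : nat) :
  (forall J, (J < K)%N -> G J * H J = G J) ->
  (forall J J', (J < K)%N -> (J' < K)%N -> J != J' -> H J * H J' = 0) ->
  \sum_(J < K) G J = 1 -> forall J, (J < K)%N -> G J = H J.
Proof.
move=> hGH hH hS J hJ.
have -> : H J = H J * \sum_(J < K) G J by rewrite hS mulr1.
rewrite mulr_sumr (bigD1 (Ordinal hJ)) //= big1 ?addr0.
  by rewrite (b_mulC HB) hGH.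
move=> J' ne; rewrite -(hGH J') // (b_mulCA HB) hH ?mulr0 //.
exact: ord_neq ne.
Qed.

From Stdlib Require Import ClassicalEpsilon.

Section Iso.
Variables (B : pzRingType) (HB : boolean_ring B) (X : Type) (d : X -> X -> B)
  (Hd : boolean_metric d) (Hconv : convex_space d).
Variables (n : nat) (P Q : nat -> X) (N M : nat -> B)
  (HP : frame d n P N) (HQ : frame d n Q M) (HNM : forall J, (J < n.+1)%N -> N J = M J).

Lemma transport : exists f : X -> X,
  forall p J, (J < n.+1)%N -> coef d Q M (f p) J = coef d P N p J.
Proof.
have H : forall p, exists q, forall J, (J < n.+1)%N -> coef d Q M q J = coef d P N p J.
  move=> p.
  have hpart : disjoint_partition (fun J : 'I_n.+1 => coef d P N p J).
    split; last exact: coef_sum.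
    by move=> i j ne; apply: (coef_disj HB Hd HP) => //.
  have [q hq] := Hconv (fun J : 'I_n.+1 => Q J) hpart.
  exists q => J hJ; symmetry.
  apply: (partition_eq HB (K := n.+1)) => //.
  - move=> K hK; apply: coef_le; first exact: (hq (Ordinal hK)).
    by rewrite -HNM // /coef (b_mulAC HB) (bidem HB).
  - by move=> K K' hK hK' ne; apply: (coef_disj HB Hd HQ).
  - exact: (coef_sum HB Hd HP).
exists (fun p => proj1_sig (constructive_indefinite_description _ (H p))).
by move=> p J hJ; case: (constructive_indefinite_description _ _) => q hq /=; apply: hq.
Qed.

End Iso.

Section Iso2.
Variables (B : pzRingType) (HB : boolean_ring B) (X : Type) (d : X -> X -> B)
  (Hd : boolean_metric d) (Hconv : convex_space d).
Variables (n : nat) (P Q : nat -> X) (N M : nat -> B)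
  (HP : frame d n P N) (HQ : frame d n Q M) (HNM : forall J, (J < n.+1)%N -> N J = M J).

Lemma frames_iso : exists f : X -> X,
  bisometry d f /\ forall J, (J < n.+1)%N -> f (P J) = Q J.
Proof.
have HMN : forall J, (J < n.+1)%N -> M J = N J by move=> J hJ; rewrite HNM.
have [f hf] := transport HB Hd Hconv HP HQ HNM.
have [g hg] := transport HB Hd Hconv HQ HP HMN.
have HDm : forall J K, (J < n.+1)%N -> (K < n.+1)%N -> d (P J) (P K) = d (Q J) (Q K).
  move=> J K hJ hK; case: HP => _ HDP _; case: HQ => _ HDQ _.
  by rewrite HDP // HDQ // /Dm !HNM.
exists f; split; first split.
- exists g => p.
    apply: (coef_inj HB Hd HP) => J hJ; by rewrite hg // hf.
  apply: (coef_inj HB Hd HQ) => J hJ; by rewrite hf // hg.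
- move=> p q; rewrite (dist_formula HB Hd HQ) (dist_formula HB Hd HP).
  apply: eq_bigr => J _; apply: eq_bigr => K _.
  by rewrite !hf // HDm.
- move=> J hJ; apply: (coef_inj HB Hd HQ) => K hK.
  by rewrite hf // /coef HNM // HDm.
Qed.

End Iso2.

Lemma bump_lt s l l' : (l' < s.+1)%N -> (bump l l' < s.+2)%N.
Proof. by rewrite /bump; case: (l <= l')%N => /= h; rewrite ?add1n ?add0n ?ltnS // ltnW. Qed.

Lemma PH (B : pzRingType) (HB : boolean_ring B) s : forall (K : nat) (E : nat -> nat -> B) (u : B),
 (forall l, (l < s.+1)%N -> u = u * \sum_(J < K) E l J) ->
 (forall l J, (l < s.+1)%N -> (s <= J)%N -> u * E l J = 0) ->
 (forall l l' J, (l < s.+1)%N -> (l' < s.+1)%N -> l != l' -> u * E l J * E l' J = 0) ->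
 u = 0.
Proof.
elim: s => [|s IH] K E u H1 H2 H3.
  by rewrite (H1 0%N) // mulr_sumr big1 // => J _; apply: H2.
set T := \sum_(l < s.+2) E l s.
set w := u * (1 + T).
have eq : u = w + \sum_(l < s.+2) u * E l s.
  by rewrite /w -mulr_sumr -/T -mulrDr -addrA (b_add2 HB) addr0 mulr1.
have w0 : w = 0.
  apply: (IH K E).
  - move=> l hl; rewrite /w (b_mulAC HB) -H1 //; exact: ltnW.
  - move=> l J hl; rewrite leq_eqVlt => /orP [/eqP <-|hJ].
      rewrite /w mulrDr mulr1 mulrDl mulr_sumr mulr_suml.
      rewrite (bigD1 (Ordinal (leqW hl))) //= -mulrA (bidem HB) big1 ?addr0 ?(b_add2 HB) //.
      move=> l' ne; apply: H3 => //; first by rewrite ltnW.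
    by rewrite /w (b_mulAC HB) H2 ?mul0r // ltnW.
  - move=> l l' J hl hl' ne.
    by rewrite /w -!mulrA [(1 + T) * _](b_mulC HB) !mulrA H3 ?mul0r // ltnW.
rewrite eq w0 add0r big1 // => l _.
apply: (IH K (fun l' J => E (bump l l') J)).
- move=> l' hl'; rewrite (b_mulAC HB) -H1 //; exact: bump_lt.
- move=> l' J hl'; rewrite leq_eqVlt => /orP [/eqP <-|hJ].
    by apply: H3 => //; [exact: bump_lt | exact: neq_bump].
  by rewrite (b_mulAC HB) H2 ?mul0r //; exact: bump_lt.
- move=> l1 l2 J hl1 hl2 ne.
  rewrite -!mulrA [E l s * _](b_mulC HB) !mulrA.
  by rewrite H3 ?mul0r //; [exact: bump_lt | exact: bump_lt | rewrite (inj_eq (can_inj (bumpK l)))].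
Qed.

Definition sorted_frame (B : pzRingType) (n : nat) (N : nat -> B) : Prop :=
  forall J K, (1 <= J)%N -> (J <= K)%N -> (K < n.+1)%N -> N K * N J = N K.

Section Dim.
Variables (B : pzRingType) (HB : boolean_ring B) (X : Type) (d : X -> X -> B)
  (Hd : boolean_metric d).

Lemma dim_bound m Q M (HQ : frame d m Q M) (s : nat) (p : nat -> X) (u : B) :
  (forall l l', (l < s.+2)%N -> (l' < s.+2)%N -> l != l' -> u * d (p l) (p l') = u) ->
  (forall J, (s.+1 <= J)%N -> (J < m.+1)%N -> u * M J = 0) ->
  u = 0.
Proof.
move=> Hdist Hz.
pose E l J := if (J < m.+1)%N then coef d Q M (p l) J else 0.
apply: (PH HB (s := s.+1) (K := m.+1) (E := E)).
- move=> l hl; rewrite (eq_bigr (fun J : 'I_m.+1 => coef d Q M (p l) J)).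
    by rewrite (coef_sum HB Hd HQ) mulr1.
  by move=> J _; rewrite /E ltn_ord.
- move=> l J hl hJ; rewrite /E; case: ifP => hJm; last by rewrite mulr0.
  by rewrite /coef mulrA Hz // mul0r.
- move=> l l' J hl hl' ne; rewrite /E; case: ifP => hJm; last by rewrite !mulr0.
  set c := u * coef d Q M (p l) J * coef d Q M (p l') J.
  have h1 : c * d (p l) (Q J) = 0.
    by rewrite /c (b_mulAC HB) -(mulrA u) coef_near // mulr0 mul0r.
  have h2 : c * d (p l') (Q J) = 0 by rewrite /c -mulrA coef_near // mulr0.
  have := loc_subst HB Hd h1 h2; rewrite (dxx Hd) mulr0 => e.
  have : c * d (p l) (p l') = c.
    by rewrite /c (b_mulAC HB) [u * _ * d _ _](b_mulAC HB) Hdist.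
  by rewrite -e.
Qed.

Lemma dim_le n m P N Q M (HP : frame d n P N) (HQ : frame d m Q M)
  (SP : sorted_frame n N) (SQ : sorted_frame m M) :
  forall K, (1 <= K)%N -> (K < n.+1)%N -> N K * (1 + M K) = 0.
Proof.
case=> [//|s] _ hK.
have [N0 HD _] := HP.
set u := N s.+1 * (1 + M s.+1).
have uN : forall l, (l < s.+2)%N -> u * N l = u.
  case=> [|l] hl; first by rewrite N0 mulr1.
  by rewrite /u (b_mulAC HB) SP.
apply: (dim_bound HQ (s := s) (p := P)).
- move=> l l' hl hl' ne.
  rewrite HD; [|exact: leq_trans hl hK|exact: leq_trans hl' hK].
  have e : u = u * (N l * N l') by rewrite mulrA !uN.
  by rewrite {1}e -mulrA (Dm_FA HB N0 ne) -e.
- move=> J hJ hJm.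
  rewrite /u -mulrA mulrDl mul1r (b_mulC HB (M s.+1)) SQ //.
  by rewrite (b_add2 HB) mulr0.
Qed.

End Dim.

Definition Pb (X : Type) (o : X) (n : nat) (x : 'I_n -> X) (J : nat) : X :=
  if J is j.+1 then (if (insub j : option 'I_n) is Some i then x i else o) else o.

Definition Nb (B : pzRingType) (X : Type) (d : X -> X -> B) (o : X) (n : nat)
  (x : 'I_n -> X) (J : nat) : B :=
  if J is 0%N then 1 else d o (Pb o x J).

Lemma Pb_ord (X : Type) (o : X) n (x : 'I_n -> X) (i : 'I_n) : Pb o x i.+1 = x i.
Proof. by rewrite /Pb valK. Qed.

Lemma Pb_out (X : Type) (o : X) n (x : 'I_n -> X) J : (n < J)%N -> Pb o x J = o.
Proof.
case: J => [//|j] h; rewrite /Pb insubF //.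
by apply/negbTE; rewrite -leqNgt.
Qed.

Lemma Pb_cases n J : (J < n.+1)%N ->
  J = 0%N \/ exists i : 'I_n, J = i.+1.
Proof.
case: J => [|j] h; [by left | right].
by exists (Ordinal (h : (j < n)%N)).
Qed.

Section Base.
Variables (B : pzRingType) (HB : boolean_ring B) (X : Type) (d : X -> X -> B)
  (Hd : boolean_metric d).
Variables (o : X) (n : nat) (x : 'I_n -> X) (Hx : base d o x).

Lemma base_frame : frame d n (Pb o x) (Nb d o x).
Proof.
have [[[xinj xo xorth] cov] srt] := Hx.
split => //.
- move=> J K hJ hK.
  have [->|[i ->]] := Pb_cases hJ; have [->|[i' ->]] := Pb_cases hK.
  + by rewrite /Dm eqxx (dxx Hd).
  + by rewrite /Dm /=.
  + by rewrite /Dm /= dC.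
  + rewrite /Dm /Nb eqSS; case: eqP => [/val_inj ->|/eqP ne]; first by rewrite (dxx Hd).
    rewrite !Pb_ord /=; apply: xorth.
    by apply: contra ne => /eqP ->.
- move=> p; have [k [xs [a [hc hp hcomb]]]] := cov p.
  exists k, xs, a; split => // i.
  case: (hc i) => [->|[j ->]]; first by exists 0%N.
  by exists j.+1; [rewrite ltnS ltn_ord | rewrite Pb_ord].
Qed.

Lemma base_sorted : sorted_frame n (Nb d o x).
Proof.
have [_ srt] := Hx.
case=> [//|j] [//|k] _ hjk hk.
have hj : (j < n)%N by apply: leq_ltn_trans hjk hk.
have := srt (Ordinal hj) (Ordinal (hk : (k < n)%N)) hjk.
by rewrite /ble /bnorm /Nb -!(Pb_ord o x).
Qed.

Lemma base_out J : (n < J)%N -> Nb d o x J = 0.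
Proof. by case: J => [//|j] h; rewrite /Nb Pb_out // (dxx Hd). Qed.

Lemma base_nz : (0 < n)%N -> Nb d o x n <> 0.
Proof.
have [[[xinj xo xorth] cov] srt] := Hx.
case: n x xo => [//|n'] x' xo _.
rewrite /Nb (Pb_ord o x' ord_max) => /(d_eq0 Hd) h.
exact: (xo ord_max).
Qed.

End Base.

Theorem mainTheorem5 (B : pzRingType) (X : Type) (d : X -> X -> B)
  (HB : boolean_ring B) (Hd : boolean_metric d) (Hconv : convex_space d)
  (o o' : X) (n m : nat) (x : 'I_n -> X) (y : 'I_m -> X)
  (Hx : base d o x) (Hy : base d o' y) :
  n = m /\
  (forall (i : nat) (Hn : (i < n)%N) (Hm : (i < m)%N),
      bnorm d o (x (Ordinal Hn)) = bnorm d o' (y (Ordinal Hm))) /\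
  exists f : X -> X,
    [/\ bisometry d f, f o = o' &
        forall (i : nat) (Hn : (i < n)%N) (Hm : (i < m)%N),
          f (x (Ordinal Hn)) = y (Ordinal Hm)].
Proof.
have FX := base_frame Hd Hx.
have FY := base_frame Hd Hy.
have SX : sorted_frame n (Nb d o x) := base_sorted Hx.
have SY : sorted_frame m (Nb d o' y) := base_sorted Hy.
have dimXY := dim_le HB Hd FX FY SX SY.
have dimYX := dim_le HB Hd FY FX SY SX.
have nm : n = m.
  apply/eqP; rewrite eqn_leq; apply/andP; split.
  - rewrite leqNgt; apply/negP => hmn.
    have h0 : (0 < n)%N by apply: leq_ltn_trans _ hmn.
    apply: (base_nz Hd Hx h0).
    by have := dimXY n h0 (ltnSn n); rewrite (base_out Hd o' y hmn) addr0 mulr1.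
  - rewrite leqNgt; apply/negP => hmn.
    have h0 : (0 < m)%N by apply: leq_ltn_trans _ hmn.
    apply: (base_nz Hd Hy h0).
    by have := dimYX m h0 (ltnSn m); rewrite (base_out Hd o x hmn) addr0 mulr1.
subst m.
have HNM : forall J, (J < n.+1)%N -> Nb d o x J = Nb d o' y J.
  case=> [//|j] hj.
  have a := dimXY j.+1 erefl hj.
  have b := dimYX j.+1 erefl hj.
  move: a b; set a' := Nb d o x j.+1; set b' := Nb d o' y j.+1 => a b.
  have ea : a' = a' * b'.
    by move/eqP: a; rewrite mulrDr mulr1 addr_eq0 (b_opp HB) => /eqP.
  have eb : b' = b' * a'.
    by move/eqP: b; rewrite mulrDr mulr1 addr_eq0 (b_opp HB) => /eqP.
  by rewrite ea (b_mulC HB) -eb.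
split; first by [].
split.
  move=> i Hn Hm.
  rewrite /bnorm -(Pb_ord o x (Ordinal Hn)) -(Pb_ord o' y (Ordinal Hm)).
  exact: (HNM i.+1 Hn).
have [f [fiso fP]] := frames_iso HB Hd Hconv FX FY HNM.
exists f; split => //.
  exact: (fP 0%N erefl).
move=> i Hn Hm.
rewrite -(Pb_ord o x (Ordinal Hn)) -(Pb_ord o' y (Ordinal Hm)).
exact: fP.
Qed.
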